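(* Let $n\ge 1$, $k\ge 1$, and let $\gamma=((i_1\,j_1),\dots,(i_k\,j_k))\in\Sigma_n(k)$. Fix $l\in\{1,\dots,k\}$. Then: 1. $i_l<x$ for every $x\in C_{\gamma_{l-1}}(j_l)$; moreover, $i_l$ is the largest element $y$ of $C_{\gamma_{l-1}}(i_l)$ such that $y$ is smaller than every element of $C_{\gamma_{l-1}}(j_l)$. 2. $j_l=\max C_{\gamma_{l-1}}(j_l)$. 3. $i_l<x$ for every $x\in C_{\gamma_{l-1}}(i_l+1)$. 4. If $i_l+1\notin\{i_1,\dots,i_{l-1}\}$, then $C_{\gamma_{l-1}}(i_l+1)=\{i_l+1\}$. 5. If $k=n-1$, $i_l=\max\{i_1,\dots,i_{n-1}\}$ and $l=\max\{s\in\{1,\dots,k\}: i_s=i_l\}$, then $j_l=i_l+1$.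
   Context: Let $n\ge1$. $\mathfrak S_n$ is the symmetric group on $\{1,\dots,n\}$; products of permutations are composed from right to left, i.e. $(\sigma\pi)(x)=\sigma(\pi(x))$. $\mathsf T_n$ denotes the set of transpositions of $\mathfrak S_n$; a transposition is always written $(i\,j)$ with $i<j$. For $\sigma\in\mathfrak S_n$, $\ell(\sigma)$ is the number of cycles of $\sigma$ (fixed points counted as cycles) and $|\sigma|=n-\ell(\sigma)$. For $\sigma_1,\sigma_2\in\mathfrak S_n$, write $\sigma_1\preccurlyeq\sigma_2$ iff $|\sigma_2|=|\sigma_1|+|\sigma_1^{-1}\sigma_2|$. For $k\ge0$, $\Sigma_n(k)=\{(\tau_1,\dots,\tau_k)\in(\mathsf T_n)^k : |\tau_1\cdots\tau_k|=k,\ \tau_1\cdots\tau_k\preccurlyeq(1\,2\,\dots\,n)\}$. For $\gamma=(\tau_1,\dots,\tau_k)\in\Sigma_n(k)$ and $0\le l\le k$, $\gamma_l=\tau_1\cdots\tau_l$ (so $\gamma_0$ is the identity). For $\pi\in\mathfrak S_n$ and $x\in\{1,\dots,n\}$, $C_\pi(x)$ denotes the cycle of $\pi$ containing $x$, regarded as a subset of $\{1,\dots,n\}$. *)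

(* Defs.v *)
From mathcomp Require Import all_boot all_fingroup.
Set Implicit Arguments.
Unset Strict Implicit.
Unset Printing Implicit Defensive.

(* Convention: the ground set {1,...,n} is modelled by 'I_n = {0,...,n-1},
   via the order-preserving shift x |-> x-1.  All statements involve only
   the order, successor (+1) and cycle structure, so this is harmless. *)

Definition ncycles n (s : {perm 'I_n}) : nat := #|porbits s|.
Definition absp n (s : {perm 'I_n}) : nat := n - ncycles s.

(* The paper composes right to left: (s p)(x) = s(p(x)).  In MathComp,
   (p * s) x = s (p x), so the paper's product s p is MathComp's  p * s. *)
Definition pcomp n (s p : {perm 'I_n}) : {perm 'I_n} := p * s.

Definition preceq n (s1 s2 : {perm 'I_n}) : Prop :=
  absp s2 = absp s1 + absp (pcomp s1^-1 s2).

(* The long cycle (1 2 ... n), i.e. x |-> x+1 mod n on 'I_n. *)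
Definition longcycle n : {perm 'I_n} := perm (@ordS_inj n).

(* A transposition (i j), i<j, is represented by the pair (i, j). *)
Definition transp n (p : 'I_n * 'I_n) : {perm 'I_n} := tperm p.1 p.2.

Fixpoint tprod n (g : seq ('I_n * 'I_n)) : {perm 'I_n} :=
  match g with
  | [::] => 1
  | p :: g' => pcomp (transp p) (tprod g')
  end.

Definition gam n (g : seq ('I_n * 'I_n)) (l : nat) : {perm 'I_n} :=
  tprod (take l g).

Definition Sigma n (k : nat) (g : seq ('I_n * 'I_n)) : Prop :=
  [/\ size g = k,
      all (fun p : 'I_n * 'I_n => p.1 < p.2) g,
      absp (tprod g) = k &
      preceq (tprod g) (longcycle n)].

Definition Cyc n (pi : {perm 'I_n}) (x : 'I_n) : {set 'I_n} := porbit pi x.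

(* Main.v *)
Require Import Defs.
From mathcomp Require Import all_boot all_fingroup.
From mathcomp Require Import zify.
Set Implicit Arguments. Unset Strict Implicit. Unset Printing Implicit Defensive.

Section Aux.
Variable n : nat.
Implicit Types (s t : {perm 'I_n}).

Definition dd (x y : nat) := if x <= y then y - x else y + n - x.
Definition sb (a b c : nat) : Prop := 0 < dd a b /\ dd a b < dd a c.

Lemma ddP (x y : nat) : x < n -> (x <= y /\ dd x y + x = y) \/ (y < x /\ dd x y + x = y + n).
Proof. move=> xn; rewrite /dd; case: (leqP x y); lia. Qed.

Implicit Types (x y z u v w : 'I_n).
Ltac ddfacts := repeat match goal with
 | |- context [dd ?x ?y] => lazymatch goal with
      | _ : context [dd x y + x = y] |- _ => fail
      | _ => have := @ddP x y; intro end end.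
Ltac bnds := repeat match goal with
 | |- context [nat_of_ord ?x] => lazymatch goal with
      | _ : is_true (nat_of_ord x < _) |- _ => fail
      | _ => have := ltn_ord x; intro end end.
Ltac gen_ords := repeat match goal with
 | |- context [nat_of_ord ?a] => have := ltn_ord a; let t := fresh "t" in set t := nat_of_ord a; clearbody t
 end.
Ltac norm_ords := repeat match goal with
 | |- context [nat_of_ord ?a] => match goal with
    | |- context [nat_of_ord ?b] => tryif constr_eq a b then fail else
          (unify a b; change (nat_of_ord b) with (nat_of_ord a))
    end
 end.
Ltac dlia :=
  repeat match goal with H : context [dd _ _] |- _ => revert H end;
  repeat match goal with H : context [sb _ _ _] |- _ => revert H end;
  repeat match goal with H : context [nat_of_ord _] |- _ => revert H end;
  unfold sb; gen_ords; ddfacts; intros; lia.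


Lemma dlt (a b : 'I_n) : dd a b < n.
Proof. dlia. Qed.
Lemma dadd (a b c : 'I_n) : dd a b + dd b c < n -> dd a c = dd a b + dd b c.
Proof. dlia. Qed.
Lemma dbet (a b c : 'I_n) : dd a b <= dd a c -> dd a b + dd b c = dd a c.
Proof. dlia. Qed.
Lemma dbet2 (a b c : 'I_n) : dd b c <= dd a c -> dd a b + dd b c = dd a c.
Proof. dlia. Qed.

Lemma porb_step s x z : z \in porbit s x -> s z \in porbit s x.
Proof. by case/porbitP=> i ->; rewrite -permM -expgSr mem_porbit. Qed.

Lemma porb_closed s (P : 'I_n -> Prop) x :
  (forall z, P z -> P (s z)) -> P x -> forall z, z \in porbit s x -> P z.
Proof.
move=> HP Px z /porbitP[i ->]; elim: i => [|i IH]; first by rewrite expg0 perm1.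
by rewrite expgSr permM; apply: HP.
Qed.

Lemma porb_fix s x y : s x = x -> y \in porbit s x -> y = x.
Proof. by move=> sx; apply: (porb_closed (P := fun z => z = x)) => // z ->. Qed.

Lemma porb_trans s x y z : z \in porbit s y -> y \in porbit s x -> z \in porbit s x.
Proof. by move=> zy; rewrite -eq_porbit_mem => /eqP <-. Qed.

Lemma ncyc_le s : ncycles s <= n.
Proof. rewrite /ncycles /porbits; apply: leq_trans (leq_imset_card _ _) _; by rewrite card_ord. Qed.

Lemma ncyc_tperm s x y : ncycles (tperm x y * s) + (x \notin porbit s y).*2 = ncycles s + (x != y).
Proof. exact: porbits_mul_tperm. Qed.

Lemma absp_T s x y : absp (tperm x y * s) <= (absp s).+1.
Proof.
have [<-|nxy] := eqVneq x y; first by rewrite tperm1 mul1g.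
have := ncyc_tperm s x y; have := ncyc_le s; have := ncyc_le (tperm x y * s).
rewrite /absp nxy; case: (x \in _) => /=; lia.
Qed.

Lemma absp_V s : absp s^-1 = absp s.
Proof. by rewrite /absp /ncycles porbitsV. Qed.

Lemma absp_Tr s x y : absp (s * tperm x y) <= (absp s).+1.
Proof. by rewrite -absp_V invMg tpermV -(absp_V s); apply: absp_T. Qed.

Lemma absp1 : absp (1 : {perm 'I_n}) = 0.
Proof.
rewrite /absp /ncycles /porbits card_imset ?card_ord ?subnn //.
move=> x y /= E; have : x \in porbit 1 y by rewrite -E porbit_id.
by move/(porb_fix (perm1 _)).
Qed.

Lemma tprod_cat (a b : seq ('I_n * 'I_n)) : tprod (a ++ b) = (tprod b * tprod a)%g.
Proof. elim: a => [|p a IH] /=; first by rewrite mulg1. by rewrite /pcomp IH mulgA. Qed.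

Lemma absp_tprodl h s : absp (tprod h * s)%g <= absp s + size h.
Proof.
elim: h s => [|p h IH] s /=; first by rewrite mul1g addn0.
rewrite /pcomp -mulgA; apply: leq_trans (IH _) _; have := absp_T s p.1 p.2.
by rewrite /transp addnS -addSn leq_add2r.
Qed.

Lemma absp_tprodr h s : absp (s * tprod h)%g <= absp s + size h.
Proof.
elim: h s => [|p h IH] s /=; first by rewrite mulg1 addn0.
rewrite /pcomp mulgA; apply: leq_trans (absp_Tr _ _ _) _; by rewrite addnS ltnS IH.
Qed.

Lemma perm_neq1 s : s != 1%g -> exists x, s x != x.
Proof.
move=> ne; case: (pickP (fun x => s x != x)) => [x H|H]; first by exists x.
case/eqP: ne; apply/permP => x; move: (H x) => /negbFE/eqP ->; by rewrite perm1.
Qed.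

Lemma split_count s x y : x != y -> x \in porbit s y -> ncycles (tperm x y * s) = (ncycles s).+1.
Proof. move=> nxy xin; have := ncyc_tperm s x y; rewrite xin nxy /=; lia. Qed.

Lemma triangle (a b : {perm 'I_n}) : absp (a * b)%g <= absp a + absp b.
Proof.
have [m] := ubnP (absp b); elim: m a b => // m IH a b lt_b.
have [->|ne] := eqVneq b 1%g; first by rewrite mulg1 absp1 addn0.
case: (perm_neq1 ne) => x bx.
have xin : x \in porbit b (b x) by rewrite porbit_sym; have := mem_porbit b 1 x; rewrite expg1.
have nx : x != b x by rewrite eq_sym.
have hc := split_count nx xin.
have hle := ncyc_le (tperm x (b x) * b).
have hb := ncyc_le b.
have E : b = (tperm x (b x) * (tperm x (b x) * b))%g by rewrite tpermKg.
have h1 : absp (tperm x (b x) * b) < m by move: lt_b hle; rewrite /absp hc; lia.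
rewrite {1}E mulgA; apply: leq_trans (IH _ _ h1) _.
apply: leq_trans (leq_add (absp_Tr a x (b x)) (leqnn _)) _.
rewrite addSn -addnS leq_add2l; move: hle; rewrite /absp hc; lia.
Qed.


Definition Q s := forall u v : 'I_n, sb u v (s u) -> sb u (s v) (s u).

Lemma Qorb s u v w : Q s -> sb u v (s u) -> w \in porbit s v -> sb u w (s u).
Proof. move=> HQ H; apply: (porb_closed (P := fun z => sb u z (s u))) => // z; exact: HQ. Qed.

Lemma Qincr s u w : Q s -> w \in porbit s u -> ~ sb u w (s u).
Proof. move=> HQ Hw H; have := Qorb (w := u) HQ H; rewrite porbit_sym => /(_ Hw); dlia. Qed.

Lemma ordne (x y : 'I_n) : x != y -> (x : nat) <> y.
Proof. by move=> /eqP H E; apply: H; apply: val_inj. Qed.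

Lemma porb_nfix s x y : y \in porbit s x -> y != x -> (s x : nat) <> x.
Proof.
move=> Hy nyx E; have E' : s x = x by apply: val_inj.
by move: (porb_fix E' Hy) nyx => ->; rewrite eqxx.
Qed.

Lemma porb_same s x v w : v \in porbit s x -> w \in porbit s x -> w \in porbit s v.
Proof. by move=> vx wx; apply: porb_trans wx _; rewrite porbit_sym. Qed.

Lemma split_x s x y v : Q s -> x != y -> y \in porbit s x -> sb x v (s y) ->
  sb x (s (tperm x y v)) (s y).
Proof.
move=> HQ nxy yO Hv.
have sxne : (s x : nat) <> x by apply: (porb_nfix yO); rewrite eq_sym.
have syO : s y \in porbit s x := porb_step yO.
case: tpermP => [vx|vy|nvx nvy].
- subst v; exfalso; dlia.
- subst v; have := Qincr HQ syO.
  have : (s x : nat) <> s y by apply/ordne; rewrite (inj_eq perm_inj).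
  dlia.
- have nvx' : (v:nat) <> x by move=> E; apply: nvx; apply: val_inj.
  have nvy' : (v:nat) <> y by move=> E; apply: nvy; apply: val_inj.
  case: (boolP (v \in porbit s x)) => vO.
  + have := Qincr HQ (porb_same vO syO).
    have : (s v : nat) <> v.
      apply: (porb_nfix (porb_same vO (porbit_id s x))).
      by apply/eqP => E; apply: nvx.
    have : (s v : nat) <> s y by apply/ordne; rewrite (inj_eq perm_inj); apply/eqP.
    dlia.
  + case: (@arg_minnP _ x (fun z => z \in porbit s x) (fun z => dd z v) (porbit_id s x)).
    move=> z /= zO zmin.
    have m1 := zmin x (porbit_id s x).
    have m2 := zmin (s z) (porb_step zO).
    have m3 := zmin (s y) syO.
    have nzv : (v:nat) <> z by apply/ordne; apply: contraNneq vO => ->.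
    have nszv : (v:nat) <> s z by apply/ordne; apply: contraNneq vO => ->; apply: porb_step.
    have szne : (s z:nat) <> z.
      move=> E; have E' : s z = z by apply: val_inj.
      have hx := porb_fix E' (porb_same zO (porbit_id s x)).
      have hy := porb_fix E' (porb_same zO yO).
      by move: nxy; rewrite hx hy eqxx.
    have inc := Qincr HQ (porb_same zO syO).
    have Hz : sb z v (s z).
      split; first by clear m1 m2 m3 inc Hv; dlia.
      rewrite ltnNge; apply/negP => le.
      have := dbet le; have : 0 < dd z (s z) by clear m1 m2 m3 inc Hv le; dlia.
      lia.
    have Hq := HQ z v Hz.
    have e1 := dbet2 m1.
    have e2 : dd x z + dd z (s y) = dd x (s y) by apply: dbet; case: Hv; lia.
    have e3 : dd x (s v) = dd x z + dd z (s v).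
      apply: dadd; case: Hv Hq; move: inc; rewrite /sb; have := @dlt x (s y); lia.
    rewrite /sb e3; case: Hv Hq; move: inc; rewrite /sb; lia.
Qed.

Lemma Q_split s x y : Q s -> x != y -> y \in porbit s x -> Q (tperm x y * s)%g.
Proof.
move=> HQ nxy yO u v; rewrite !permM.
case: (tpermP x y u) => [->|->|nux nuy] H.
- exact: split_x HQ nxy yO H.
- have xO : x \in porbit s y by rewrite porbit_sym.
  by rewrite tpermC; apply: split_x HQ _ xO H; rewrite eq_sym.
- case: (tpermP x y v) => [vx|vy|_ _].
  + by subst v; apply: (Qorb HQ H); apply: porb_step.
  + by subst v; apply: (Qorb HQ H); apply: porb_step; rewrite porbit_sym.
  + exact: HQ.
Qed.


Lemma Qc : Q (longcycle n).
Proof.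
move=> u v; rewrite /longcycle !permE /= => H; exfalso.
have E : (u.+1 %% n = u.+1) \/ (u.+1 = n /\ u.+1 %% n = 0).
  have := ltn_ord u; case: (ltnP u.+1 n) => h1 h2; first by left; rewrite modn_small.
  right; have e : u.+1 = n by lia.
  by rewrite e modnn.
move: H; rewrite /sb; have := ltn_ord u; have := @ddP u (u.+1 %% n); case: E => [e|[e1 e2]]; rewrite ?e ?e2; lia.
Qed.

Lemma merge_join s i j : i != j -> i \notin porbit s j -> j \in porbit (tperm i j * s)%g i.
Proof.
move=> nij Hm; apply/negPn/negP => H.
have h1 := ncyc_tperm s i j; have h2 := ncyc_tperm (tperm i j * s)%g i j.
rewrite tpermKg porbit_sym H nij /= in h2; rewrite nij Hm /= in h1.
move: h1 h2; move: (ncycles s) (ncycles (tperm i j * s)%g) => a b; lia.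
Qed.

Lemma merge_sub s i j w z : i != j -> i \notin porbit s j -> z \in porbit s w ->
  z \in porbit (tperm i j * s)%g w.
Proof.
move=> nij Hm; apply: (porb_closed (P := fun z => z \in porbit (tperm i j * s)%g w)); last exact: porbit_id.
move=> u Hu; have -> : s u = (tperm i j * s)%g (tperm i j u) by rewrite permM tpermK.
apply: porb_step; case: tpermP => [e|e|_ _] //; subst u.
- exact: porb_trans (merge_join nij Hm) Hu.
- by apply: porb_trans _ Hu; rewrite porbit_sym merge_join.
Qed.

Lemma merge_out s i j w : w \notin porbit s i -> w \notin porbit s j ->
  porbit (tperm i j * s)%g w = porbit s w.
Proof.
move=> wi wj.
have E : forall m, (((tperm i j * s) ^+ m)%g w) = ((s ^+ m)%g w).
  elim=> [|m IH]; first by rewrite !expg0.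
  rewrite !expgSr !permM IH tpermD //.
  - by apply: contra wi => /eqP ->; rewrite porbit_perm porbit_id.
  - by apply: contra wj => /eqP ->; rewrite porbit_perm porbit_id.
by apply/setP => z; apply/porbitP/porbitP => -[m ->]; exists m; rewrite E.
Qed.

Lemma merge_in s i j z : z \in porbit (tperm i j * s)%g i -> z \in porbit s i \/ z \in porbit s j.
Proof.
apply: (porb_closed (P := fun z => z \in porbit s i \/ z \in porbit s j)); last by left; exact: porbit_id.
move=> u Hu; rewrite permM; case: tpermP => [_|_|_ _].
- by right; apply: porb_step; apply: porbit_id.
- by left; apply: porb_step; apply: porbit_id.
- by case: Hu => H; [left|right]; apply: porb_step.
Qed.

Lemma disj s i j w : w \in porbit s i -> w \in porbit s j -> i \in porbit s j.
Proof. by move=> wi wj; apply: porb_trans wj; rewrite porbit_sym. Qed.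


Lemma preceq_Q s : preceq s (longcycle n) -> Q s.
Proof.
rewrite /preceq /Defs.pcomp.
have [m] := ubnP (absp (longcycle n * s^-1)%g); elim: m s => // m IH s lt_m Hs; rewrite /pcomp in Hs.
have [E|ne] := eqVneq (longcycle n * s^-1)%g 1%g.
  have -> : s = longcycle n by apply/eqP; rewrite eq_sym eq_mulgV1 E.
  exact: Qc.
case: (perm_neq1 ne) => x dx.
set c := longcycle n in lt_m Hs ne dx *.
set d := (c * s^-1)%g in lt_m Hs ne dx *.
set y := d x in dx *.
have nxy : x != y by rewrite eq_sym.
have xin : x \in porbit d^-1 y.
  by rewrite porbitV porbit_sym /y; have := mem_porbit d 1 x; rewrite expg1.
have hc := split_count nxy xin.
have hle := ncyc_le (tperm x y * d^-1)%g.
have Ed : (c * (tperm x y * s)^-1)%g = (d * tperm x y)%g by rewrite invMg tpermV mulgA.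
have hd : absp (d * tperm x y)%g = (absp d).-1 /\ 0 < absp d.
  rewrite -absp_V invMg tpermV -(absp_V d) /absp hc; move: hle; rewrite hc.
  move: (ncycles d^-1) => a; lia.
have h2 := absp_T s x y.
have h3 : absp c <= absp (c * (tperm x y * s)^-1)%g + absp (tperm x y * s)%g.
  by rewrite -{1}(mulgVK (tperm x y * s)%g c); apply: triangle.
rewrite Ed in h3.
have Hs' : absp c = absp (tperm x y * s)%g + absp (c * (tperm x y * s)^-1)%g.
  rewrite Ed; move: hd h2 h3 Hs; move: (absp c) (absp d) (absp s) (absp (tperm x y * s)%g) (absp (d * tperm x y)%g).
  move=> a b e f g; lia.
have lt' : absp (c * (tperm x y * s)^-1)%g < m.
  rewrite Ed; case: hd => -> pos; move: lt_m pos; move: (absp d) => a; lia.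
have HQ' := IH _ lt' Hs'.
have xin' : x \in porbit (tperm x y * s)%g y.
  have h4 := ncyc_tperm (tperm x y * s)%g x y; rewrite tpermKg nxy in h4.
  apply/negPn/negP => H; rewrite H /= in h4.
  have b1 := ncyc_le s; have b2 := ncyc_le (tperm x y * s)%g.
  move: Hs' Hs hd h4 b1 b2; rewrite Ed /absp.
  move: (ncycles s) (ncycles (tperm x y * s)%g) (n - ncycles c) (n - ncycles d) (n - ncycles (d * tperm x y)%g).
  move=> a b e f g; lia.
have -> : s = (tperm x y * (tperm x y * s))%g by rewrite tpermKg.
by apply: Q_split HQ' nxy _; rewrite porbit_sym.
Qed.

Section Merge.
Variables (s : {perm 'I_n}) (i j : 'I_n).
Hypotheses (HQ : Q s) (HR : Q (tperm i j * s)%g) (lij : i < j) (Hm : i \notin porbit s j).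

Let nij : i != j. Proof. by rewrite -val_eqE neq_ltn lij. Qed.
Let sjB : s j \in porbit s j. Proof. exact: porb_step (porbit_id s j). Qed.
Let siA : s i \in porbit s i. Proof. exact: porb_step (porbit_id s i). Qed.
Let E1 : ((tperm i j * s)%g i : nat) = s j. Proof. by rewrite permM tpermL. Qed.
Let E2 : ((tperm i j * s)%g j : nat) = s i. Proof. by rewrite permM tpermR. Qed.

Lemma it1a b : b \in porbit s j -> i < b.
Proof.
move=> bB; rewrite ltnNge; apply/negP => bi.
have nbj : b != j by rewrite -val_eqE neq_ltn; apply/orP; left; apply: leq_ltn_trans bi lij.
have sjj := porb_nfix bB nbj.
have inc1 := Qincr HR (merge_join nij Hm).
have nsji : (s j : nat) <> i by apply: ordne; apply: contraNneq Hm => <-.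
have nbi : (b : nat) <> i by apply: ordne; apply: contraNneq Hm => <-.
have inc2 := Qincr HQ bB.
have E := E1.
dlia.
Qed.

Lemma it2 b : b \in porbit s j -> b <= j.
Proof.
move=> bB; rewrite leqNgt; apply/negP => jb.
have inc := Qincr HR (merge_sub nij Hm bB).
have E := E2.
have nsib : (s i : nat) <> b.
  apply: ordne; apply: contraNneq Hm => e; apply: (disj (w := b)) => //; rewrite -e //.
have nsij : (s i : nat) <> j.
  apply: ordne; apply: contraNneq Hm => e; apply: (disj (w := j)); [rewrite -e // | exact: porbit_id].
have H1 : sb i j (s i) by dlia.
have := Qorb HQ H1 bB.
dlia.
Qed.

Lemma it1b y : y \in porbit s i -> (forall b, b \in porbit s j -> y < b) -> y <= i.
Proof.
move=> yA yl; rewrite leqNgt; apply/negP => iy.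
have inc := Qincr HR (merge_sub nij Hm yA).
have E := E1.
have h1 := yl _ sjB; have h2 := it1a sjB.
dlia.
Qed.

Lemma it3 y : val y = i.+1 -> forall x, x \in porbit s y -> i < x.
Proof.
move=> yv0 x xy; have yv : (y : nat) = i.+1 by exact: yv0.
clear yv0; case: (eqVneq (s j) y) => [e|ne].
  by apply: it1a; rewrite -e in xy; exact: porb_trans xy sjB.
have gt := it1a sjB; have nsjy := ordne ne.
have E := E1.
have H1 : sb i y ((tperm i j * s)%g i) by dlia.
have := Qorb HR H1 (merge_sub nij Hm xy).
dlia.
Qed.

End Merge.


Section Seq.
Variables (k : nat) (g : seq ('I_n * 'I_n)) (p0 : 'I_n * 'I_n).
Hypothesis HS : Sigma k g.

Let sz : size g = k. Proof. by case: HS. Qed.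

Lemma gam0 : gam g 0 = 1%g.
Proof. by rewrite /gam take0. Qed.

Lemma gamS m : m < k -> gam g m.+1 = (transp (nth p0 g m) * gam g m)%g.
Proof.
by move=> mk; rewrite /gam (take_nth p0) ?sz // -cats1 tprod_cat /= /Defs.pcomp mul1g.
Qed.

Lemma pref m : m <= k -> absp (gam g m) = m /\ preceq (gam g m) (longcycle n).
Proof.
move=> mk; case: HS => _ _ ab pc.
have Eg : tprod g = (tprod (drop m g) * gam g m)%g by rewrite /gam -tprod_cat cat_take_drop.
have s1 : size (take m g) = m by rewrite size_takel // sz.
have s2 : size (drop m g) = k - m by rewrite size_drop sz.
have u1 := absp_tprodl (take m g) 1%g; rewrite mulg1 absp1 s1 in u1.
have u2 := absp_tprodl (drop m g) (gam g m); rewrite -Eg ab s2 in u2.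
have Ga : absp (gam g m) = m by move: u1 u2; rewrite /gam; move: (absp _) => a; lia.
split => //; move: pc; rewrite /preceq /Defs.pcomp Ga.
set c := longcycle n.
have E3 : (c * (gam g m)^-1)%g = (c * (tprod g)^-1 * tprod (drop m g))%g.
  by rewrite Eg invMg !mulgA mulgVK.
have u3 := absp_tprodr (drop m g) (c * (tprod g)^-1)%g; rewrite -E3 s2 in u3.
have u4 := absp_tprodr (take m g) (c * (gam g m)^-1)%g.
rewrite s1 -/(gam g m) mulgVK in u4.
rewrite ab; move: u3 u4; move: (absp c) (absp (c * (gam g m)^-1)%g) (absp (c * (tprod g)^-1)%g) => a b e.
lia.
Qed.

Lemma gQ m : m <= k -> Q (gam g m).
Proof. by move=> /pref [] _ /preceq_Q. Qed.

Lemma gmerge m : m < k ->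
  (nth p0 g m).1 < (nth p0 g m).2 /\ (nth p0 g m).1 \notin porbit (gam g m) (nth p0 g m).2.
Proof.
move=> mk; case: HS => _ al _ _.
have lt : (nth p0 g m).1 < (nth p0 g m).2 by apply: (allP al); rewrite mem_nth // sz.
split => //; apply/negP => H.
have nxy : (nth p0 g m).1 != (nth p0 g m).2 by rewrite -val_eqE neq_ltn lt.
have := split_count nxy H.
have [a1 _] := pref (ltnW mk); have [a2 _] := pref mk.
rewrite gamS // /transp in a2.
have b1 := ncyc_le (gam g m).
move: a1 a2 b1; rewrite /absp; move: (ncycles (gam g m)) (ncycles (tperm (nth p0 g m).1 (nth p0 g m).2 * gam g m)%g) => a b.
lia.
Qed.

Definition L m := [seq val p.1 | p <- take m g].

Lemma Lsub m (x : nat) : m < k -> x \in L m -> x \in L m.+1.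
Proof. by move=> mk; rewrite /L (take_nth p0) ?sz // map_rcons mem_rcons in_cons => ->; rewrite orbT. Qed.

Lemma Llast m : m < k -> val (nth p0 g m).1 \in L m.+1.
Proof. by move=> mk; rewrite /L (take_nth p0) ?sz // map_rcons mem_rcons in_cons eqxx. Qed.

Lemma gmin m x : m <= k -> (exists2 z, z \in porbit (gam g m) x & z != x) ->
  exists y, [/\ y \in porbit (gam g m) x, val y \in L m &
             forall z, z \in porbit (gam g m) x -> y <= z].
Proof.
elim: m x => [|m IH] x mk [z zx nzx].
  by rewrite gam0 in zx; move: nzx; rewrite (porb_fix (perm1 x) zx) eqxx.
have mk' : m < k by [].
have [lt nin] := gmerge mk'.
have HQ := gQ (ltnW mk').
have HR := gQ mk'; rewrite gamS // /transp in HR.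
rewrite gamS // /transp in zx *.
set i := (nth p0 g m).1 in lt nin HR zx *.
set j := (nth p0 g m).2 in lt nin HR zx *.
set σ := gam g m in HQ HR nin zx *.
have nij : i != j by rewrite -val_eqE neq_ltn lt.
case: (boolP ((x \in porbit σ i) || (x \in porbit σ j))) => H.
- have xR : x \in porbit (tperm i j * σ)%g i.
    case/orP: H => H; first exact: merge_sub.
    exact: porb_trans (merge_sub nij nin H) (merge_join nij nin).
  have Ex : porbit (tperm i j * σ)%g x = porbit (tperm i j * σ)%g i by apply/eqP; rewrite eq_porbit_mem.
  rewrite Ex.
  case: (boolP [exists w in porbit σ i, w != i]) => [/existsP[w /andP[wA nwi]]|nE].
  + have [y [yA yL ymin]] := IH i (ltnW mk') (ex_intro2 _ _ w wA nwi).
    exists y; split; first exact: merge_sub.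
      exact: Lsub.
    move=> u /merge_in [uA|uB]; first exact: ymin.
    exact: leq_trans (ymin _ (porbit_id σ i)) (ltnW (it1a HQ HR lt nin uB)).
  + exists i; split; first exact: porbit_id.
      exact: Llast.
    move=> u /merge_in [uA|uB]; last exact: ltnW (it1a HQ HR lt nin uB).
    move/existsPn: nE => /(_ u); rewrite uA /= negbK => /eqP ->; exact: leqnn.
- rewrite negb_or in H; case/andP: H => h1 h2.
  rewrite merge_out // in zx *.
  have [y [yA yL ymin]] := IH x (ltnW mk') (ex_intro2 _ _ z zx nzx).
  by exists y; split => //; apply: Lsub.
Qed.

Lemma grow l m w z : l <= m -> m <= k -> z \in porbit (gam g l) w -> z \in porbit (gam g m) w.
Proof.
elim: m => [|m IH] lm mk H; first by move: lm; rewrite leqn0 => /eqP <-.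
case: (eqVneq l m.+1) => [<- //|nl].
have lm' : l <= m by move: lm nl; rewrite leq_eqVlt => /orP[/eqP -> | ]; [rewrite eqxx|].
have H' := IH lm' (ltnW mk) H.
have [lt nin] := gmerge mk.
rewrite gamS // /transp; apply: merge_sub => //; by rewrite -val_eqE neq_ltn lt.
Qed.


Lemma item4 m (i j y : 'I_n) : m < k -> nth p0 g m = (i, j) -> val y = i.+1 ->
  i.+1 \notin L m -> porbit (gam g m) y = [set y].
Proof.
move=> mk Hp yv nL.
have [lt nin] := gmerge mk; rewrite Hp /= in lt nin.
have HQ := gQ (ltnW mk).
have HR := gQ mk; rewrite gamS // Hp /transp /= in HR.
apply/setP => z; rewrite inE; apply/idP/eqP => [zy|->]; last exact: porbit_id.
apply/eqP; apply/negPn/negP => nzy.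
have [w [wy wL wmin]] := gmin (ltnW mk) (ex_intro2 _ _ z zy nzy).
have h1 := it3 HQ HR lt nin yv wy.
have h2 := wmin y (porbit_id _ y).
have yv' : (y : nat) = i.+1 := yv.
have E : (w : nat) = i.+1 by lia.
by move: nL; rewrite -E wL.
Qed.

End Seq.


Lemma cross s (a b c y : 'I_n) : Q s -> s a = y -> (y : nat) = c.+1 -> a < c -> c < b ->
  b \in porbit s c -> False.
Proof.
move=> HQ E yv ac cb bc.
have E' : (s a : nat) = y by rewrite E.
have H1 : sb a c (s a) by dlia.
have := Qorb HQ H1 bc.
dlia.
Qed.

Lemma two_orbits s x y : porbit s x != porbit s y -> 2 <= ncycles s.
Proof.
move=> ne; rewrite /ncycles.
apply: leq_trans (_ : 2 <= #|[set porbit s x; porbit s y]|) _; first by rewrite cards2 ne.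
apply: subset_leq_card; apply/subsetP => u; rewrite !inE => /orP[] /eqP ->; by apply: imset_f; rewrite inE.
Qed.

End Aux.

Unset Implicit Arguments.

Theorem lemma3p1 (n k : nat) (g : seq ('I_n * 'I_n)) (l : nat) (il jl : 'I_n) :
  1 <= n -> 1 <= k -> Sigma k g ->
  1 <= l <= k -> onth g l.-1 = Some (il, jl) ->
  (* 1 *)
  ((forall x, x \in Cyc (gam g l.-1) jl -> il < x) /\
   (forall y, y \in Cyc (gam g l.-1) il ->
      (forall x, x \in Cyc (gam g l.-1) jl -> y < x) -> y <= il)) /\
  (* 2 *)
  (forall x, x \in Cyc (gam g l.-1) jl -> x <= jl) /\
  (* 3 *)
  (forall y : 'I_n, val y = il.+1 ->
     forall x, x \in Cyc (gam g l.-1) y -> il < x) /\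
  (* 4 *)
  (forall y : 'I_n, val y = il.+1 ->
     il.+1 \notin [seq val p.1 | p <- take l.-1 g] ->
     Cyc (gam g l.-1) y = [set y]) /\
  (* 5 *)
  (k = n.-1 ->
   (forall p, p \in g -> p.1 <= il) ->
   (forall s, l < s <= k -> val (nth (il, jl) g s.-1).1 != il) ->
   val jl = il.+1).
Proof.
move=> n1 k1 HS /andP[l1 lk] Hon.
have Hp : nth (il, jl) g l.-1 = (il, jl) := @onth_nth _ (il, jl) (il, jl) g l.-1 Hon.
have mk : l.-1 < k by move: l1 lk; lia.
have gS := gamS (il, jl) HS mk; rewrite Hp /transp /= in gS.
have [lt nin] := gmerge (il, jl) HS mk; rewrite Hp /= in lt nin.
have HQ := gQ HS (ltnW mk).
have HR := gQ HS mk; rewrite gS in HR.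
rewrite /Cyc.
split; [split|split; [|split; [|split]]].
- exact: it1a HQ HR lt nin.
- by move=> y yA; exact: (it1b HQ HR lt nin yA).
- exact: it2 HQ HR lt nin.
- by move=> y yv; exact: (it3 HQ HR lt nin yv).
- move=> y yv nL; exact: (item4 HS mk Hp yv nL).
move=> kn allle notl; apply/eqP; apply/negPn/negP => nj.
have yn : il.+1 < n by apply: leq_ltn_trans lt (ltn_ord jl).
set y : 'I_n := Ordinal yn.
have yv : val y = il.+1 by [].
have njy : jl != y by rewrite -val_eqE /=.
have niy : il != y by rewrite -val_eqE /= neq_ltn ltnSn.
pose P s := forall z, z \in porbit (gam g s) y -> z = y.
have P0 : P l.-1.
  move=> z; rewrite (item4 HS mk Hp yv) ?inE => [/eqP //|].
  apply/negP => /mapP[p pin e]; have := allle p (mem_take pin); rewrite -e ltnn //.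
have el : l.-1.+1 = l by move: l1; lia.
have jR : jl \in porbit (gam g l) il by rewrite -el gS; apply: merge_join => //; rewrite -val_eqE neq_ltn lt.
have P1 : P l.
  move=> z; rewrite -el gS merge_out.
  - exact: P0.
  - by apply: contra niy => H; apply/eqP; apply: P0; rewrite porbit_sym.
  - by apply: contra njy => H; apply/eqP; apply: P0; rewrite porbit_sym.
have Pstep : forall s, l <= s -> s < k -> P s -> P s.+1.
  move=> s ls sk Ps.
  have [lt' nin'] := gmerge (il, jl) HS sk.
  have gS' := gamS (il, jl) HS sk; rewrite /transp in gS'.
  set i' := (nth (il, jl) g s).1 in lt' nin' gS'.
  set j' := (nth (il, jl) g s).2 in lt' nin' gS'.
  have sg : s < size g by case: HS => -> _ _ _.
  have i'le : i' <= il by rewrite /i'; apply: allle; apply: mem_nth.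
  case: (boolP (y \in porbit (gam g s) i')) => [yi|yi].
    by rewrite porbit_sym in yi; have e := Ps _ yi; move: i'le; rewrite e /= ltnn.
  case: (boolP (y \in porbit (gam g s) j')) => [yj|yj]; last first.
    by move=> z; rewrite gS' merge_out //; apply: Ps.
  rewrite porbit_sym in yj; have ej := Ps _ yj.
  have ni : val i' != il.
    have := notl s.+1; rewrite /= ltnS ls sk => /(_ isT); rewrite /i'.
    by [].
  have i'lt : i' < il by rewrite ltn_neqAle ni i'le.
  have HR' := gQ HS sk; rewrite gS' in HR'.
  have sy : gam g s y = y by apply: Ps; apply: porb_step; apply: porbit_id.
  have E : (tperm i' j' * gam g s)%g i' = y by rewrite permM tpermL ej sy.
  have jR' := grow (il, jl) HS (leqW ls) sk jR; rewrite gS' in jR'.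
  by case: (cross HR' E yv i'lt lt jR').
have Pk : P k.
  have : forall s, l <= s <= k -> P s.
    elim=> [|s IH] /andP[ls sk]; first by move: l1 ls; lia.
    case: (eqVneq l s.+1) => [<- //|nl].
    have ls' : l <= s by move: ls nl; rewrite leq_eqVlt => /orP[/eqP ->|]; [rewrite eqxx|].
    by apply: Pstep => //; apply: IH; rewrite ls' ltnW.
  by apply; rewrite lk leqnn.
have [_ al ab _] := HS.
have gk : gam g k = tprod g by rewrite /gam; case: HS => <- _ _ _; rewrite take_size.
have ne : porbit (tprod g) y != porbit (tprod g) il.
  apply/negP => /eqP E; have : il \in porbit (gam g k) y by rewrite gk E porbit_id.
  by move/Pk => e; move: niy; rewrite e eqxx.
have := two_orbits ne; have := ncyc_le (tprod g); move: ab; rewrite /absp kn.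
have : 2 <= n by have := yn; lia.
move: (ncycles (tprod g)) => c; lia.
Qed.
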